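(* In a monotonous quiver, the property of a vertex of being phylogenetic is anti-hereditary: every ancestor of a phylogenetic vertex is phylogenetic.
   Context: A quiver consists of a class of vertices and, for each ordered pair of vertices $(A,B)$, a set of edges $A\to B$ (loops and multiple edges allowed). An evolution of length $m\ge 0$ is a sequence $A_0\leftarrow A_1\leftarrow\cdots\leftarrow A_m$ of vertices together with edges $A_k\to A_{k-1}$ ($1\le k\le m$); $A_0$ is its initial and $A_m$ its terminal vertex. Write $A\le B$ ($A$ is an ancestor of $B$) if there is an evolution with initial vertex $A$ and terminal vertex $B$; $A,B$ are isotypic ($A\sim B$) if $A\le B$ and $B\le A$. A vertex $A$ is primitive if every ancestor of $A$ is isotypic to $A$. A full evolution for $X$ is an evolution with primitive initial vertex and terminal vertex $X$. The height $h(X)$ is the smallest length of a full evolution for $X$ ($\infty$ if none). An evolution $\alpha=(A_0\leftarrow\cdots\leftarrow A_m)$ embeds in $\beta=(B_0\leftarrow\cdots\leftarrow B_n)$ if $m\le n$ and there are $0\le r_0<\cdots<r_m\le n$ with $A_k\sim B_{r_k}$. A universal evolution for $X$ is a full evolution for $X$ embedding in every full evolution for $X$; $X$ is phylogenetic if one exists. A quiver is monotonous if $h(A)\ge h(B)$ for every edge $A\to B$. *)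

(* Defs.v *)
From Stdlib Require Import Arith.



(* A quiver: a type of vertices V and, for each ordered pair (A,B), a type
   E A B of edges A -> B (loops and multiple edges allowed). *)

(* An evolution of length m: vertices A_0, ..., A_m (given by [ev_vert k] for
   k <= m; values beyond m are irrelevant) with edges A_k -> A_{k-1},
   i.e. for k < m an edge A_{k+1} -> A_k. *)
Record evolution (V : Type) (E : V -> V -> Type) := Evolution {
  ev_len : nat;
  ev_vert : nat -> V;
  ev_edge : forall k, k < ev_len -> E (ev_vert (S k)) (ev_vert k)
}.

Arguments ev_len {V E}.
Arguments ev_vert {V E}.

Definition initial {V E} (a : evolution V E) : V := ev_vert a 0.
Definition terminal {V E} (a : evolution V E) : V := ev_vert a (ev_len a).

Definition ancestor {V} (E : V -> V -> Type) (A B : V) : Prop :=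
  exists a : evolution V E, initial a = A /\ terminal a = B.

Definition isotypic {V} (E : V -> V -> Type) (A B : V) : Prop :=
  ancestor E A B /\ ancestor E B A.

Definition primitive {V} (E : V -> V -> Type) (A : V) : Prop :=
  forall B, ancestor E B A -> isotypic E B A.

Definition full_evolution {V} (E : V -> V -> Type) (X : V) (a : evolution V E) : Prop :=
  primitive E (initial a) /\ terminal a = X.

(* height: [is_height E X (Some n)] iff h(X) = n; [is_height E X None] iff h(X) = oo *)
Definition is_height {V} (E : V -> V -> Type) (X : V) (h : option nat) : Prop :=
  match h with
  | None => forall a : evolution V E, ~ full_evolution E X a
  | Some n =>
      (exists a : evolution V E, full_evolution E X a /\ ev_len a = n) /\
      (forall a : evolution V E, full_evolution E X a -> n <= ev_len a)
  end.

Definition le_inf (x y : option nat) : Prop :=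
  match x, y with
  | _, None => True
  | None, Some _ => False
  | Some m, Some n => m <= n
  end.

Definition embeds {V} (E : V -> V -> Type) (a b : evolution V E) : Prop :=
  ev_len a <= ev_len b /\
  exists r : nat -> nat,
    (forall k, k < ev_len a -> r k < r (S k)) /\
    r (ev_len a) <= ev_len b /\
    (forall k, k <= ev_len a -> isotypic E (ev_vert a k) (ev_vert b (r k))).

Definition universal_evolution {V} (E : V -> V -> Type) (X : V) (a : evolution V E) : Prop :=
  full_evolution E X a /\ forall b : evolution V E, full_evolution E X b -> embeds E a b.

Definition phylogenetic {V} (E : V -> V -> Type) (X : V) : Prop :=
  exists a : evolution V E, universal_evolution E X a.

Definition monotonous {V} (E : V -> V -> Type) : Prop :=
  forall (A B : V) (e : E A B) (hA hB : option nat),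
    is_height E A hA -> is_height E B hB -> le_inf hB hA.

(* Main.v *)
Require Import Defs.
From Stdlib Require Import Arith.
From Stdlib Require Import Lia Classical.

Section S.
Context {V : Type} {E : V -> V -> Type}.

Definition cat_vert (a b : evolution V E) k :=
  if k <? ev_len a then ev_vert a k else ev_vert b (k - ev_len a).

Definition concat (a b : evolution V E) (H : terminal a = initial b) : evolution V E.
Proof.
  refine (Evolution V E (ev_len a + ev_len b) (cat_vert a b) _).
  intros k Hk. unfold cat_vert.
  destruct (lt_dec (S k) (ev_len a)) as [h1|h1].
  - rewrite (proj2 (Nat.ltb_lt _ _) h1).
    assert (h2 : k < ev_len a) by lia.
    rewrite (proj2 (Nat.ltb_lt _ _) h2).
    exact (ev_edge V E a k h2).
  - destruct (Nat.eq_dec (S k) (ev_len a)) as [e|e].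
    + assert (h3 : (S k <? ev_len a) = false) by (apply Nat.ltb_ge; lia).
      rewrite h3.
      assert (h2 : k < ev_len a) by lia.
      rewrite (proj2 (Nat.ltb_lt _ _) h2).
      replace (S k - ev_len a) with 0 by lia.
      assert (eq : ev_vert a (S k) = ev_vert b 0).
      { rewrite e. exact H. }
      rewrite <- eq. exact (ev_edge V E a k h2).
    + assert (h3 : (S k <? ev_len a) = false) by (apply Nat.ltb_ge; lia).
      assert (h4 : (k <? ev_len a) = false) by (apply Nat.ltb_ge; lia).
      rewrite h3, h4.
      replace (S k - ev_len a) with (S (k - ev_len a)) by lia.
      apply (ev_edge V E b (k - ev_len a)). lia.
Defined.

Lemma concat_len a b H : ev_len (concat a b H) = ev_len a + ev_len b.
Proof. reflexivity. Qed.

Lemma concat_l a b H k : k <= ev_len a -> ev_vert (concat a b H) k = ev_vert a k.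
Proof.
  intros Hk. simpl. unfold cat_vert.
  destruct (k <? ev_len a) eqn:e; auto.
  apply Nat.ltb_ge in e. assert (k = ev_len a) by lia. subst.
  rewrite Nat.sub_diag. symmetry; exact H.
Qed.

Lemma concat_r a b H k : ev_vert (concat a b H) (ev_len a + k) = ev_vert b k.
Proof.
  simpl. unfold cat_vert.
  destruct (ev_len a + k <? ev_len a) eqn:e.
  - apply Nat.ltb_lt in e. lia.
  - f_equal. lia.
Qed.

Definition prefix (a : evolution V E) n (H : n <= ev_len a) : evolution V E :=
  Evolution V E n (ev_vert a) (fun k Hk => ev_edge V E a k (Nat.lt_le_trans _ _ _ Hk H)).

Definition triv (A : V) : evolution V E :=
  Evolution V E 0 (fun _ => A) (fun k Hk => False_rect _ (Nat.nlt_0_r k Hk)).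

Lemma anc_refl A : ancestor E A A.
Proof. exists (triv A). split; reflexivity. Qed.

Lemma anc_trans A B C : ancestor E A B -> ancestor E B C -> ancestor E A C.
Proof.
  intros [a [Ha1 Ha2]] [b [Hb1 Hb2]].
  assert (H : terminal a = initial b) by congruence.
  exists (concat a b H). split.
  - unfold initial. rewrite concat_l by lia. exact Ha1.
  - unfold terminal. rewrite concat_len, concat_r. exact Hb2.
Qed.

Lemma iso_sym A B : isotypic E A B -> isotypic E B A.
Proof. intros [h1 h2]; split; auto. Qed.

Lemma iso_trans A B C : isotypic E A B -> isotypic E B C -> isotypic E A C.
Proof. intros [h1 h2] [h3 h4]; split; eapply anc_trans; eauto. Qed.

Lemma iso_refl A : isotypic E A A.
Proof. split; apply anc_refl. Qed.

Lemma min_exists (P : nat -> Prop) n : P n -> exists m, P m /\ forall k, P k -> m <= k.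
Proof.
  induction n as [n IH] using lt_wf_ind. intros Pn.
  destruct (classic (exists k, k < n /\ P k)) as [[k [Hk Pk]]|Hno].
  - exact (IH k Hk Pk).
  - exists n. split; auto. intros k Pk.
    destruct (le_lt_dec n k); auto. exfalso; apply Hno; eauto.
Qed.

Lemma height_exists X : exists h, is_height E X h.
Proof.
  destruct (classic (exists a, full_evolution E X a)) as [[a Ha]|Hno].
  - destruct (min_exists (fun n => exists a, full_evolution E X a /\ ev_len a = n) (ev_len a))
      as [m [[b [Hb1 Hb2]] Hmin]].
    + eauto.
    + exists (Some m). split; eauto.
  - exists None. intros a Ha; eauto.
Qed.

Lemma height_uniq X h1 h2 : is_height E X h1 -> is_height E X h2 -> le_inf h1 h2.
Proof.
  destruct h1 as [n1|], h2 as [n2|]; simpl; auto.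
  - intros [_ H1] [[a [Ha Hl]] _]. subst. apply H1; auto.
  - intros H [[a [Ha _]] _]. exact (H a Ha).
Qed.

Lemma le_inf_trans x y z : le_inf x y -> le_inf y z -> le_inf x z.
Proof. destruct x, y, z; simpl; auto; try tauto; lia. Qed.

Lemma mono_anc : monotonous E -> forall Y X hY hX,
  ancestor E Y X -> is_height E Y hY -> is_height E X hX -> le_inf hY hX.
Proof.
  intros Hm Y X hY hX [g [Hg0 HgL]] HY HX.
  assert (key : forall d k h1, k + d = ev_len g -> is_height E (ev_vert g k) h1 -> le_inf h1 hX).
  { induction d as [|d IH]; intros k h1 Hk H1.
    - apply (height_uniq X). rewrite <- HgL. unfold terminal. rewrite <- Hk.
      rewrite Nat.add_0_r. exact H1. exact HX.
    - destruct (height_exists (ev_vert g (S k))) as [h' H'].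
      assert (Hlt : k < ev_len g) by lia.
      apply le_inf_trans with h'.
      + exact (Hm _ _ (ev_edge V E g k Hlt) h' h1 H' H1).
      + apply (IH (S k)); auto. lia. }
  apply (key (ev_len g) 0); auto. rewrite <- Hg0 in HY. exact HY.
Qed.

Lemma incr_gap (r : nat -> nat) N : (forall k, k < N -> r k < r (S k)) ->
  forall i j, i <= j <= N -> r i + (j - i) <= r j.
Proof.
  intros Hr i j. induction j as [|j IH]; intros Hij.
  - assert (i = 0) by lia. subst. simpl. lia.
  - destruct (Nat.eq_dec i (S j)). subst. rewrite Nat.sub_diag. lia.
    specialize (IH ltac:(lia)). specialize (Hr j ltac:(lia)). lia.
Qed.

End S.

Theorem corollary6p2 (V : Type) (E : V -> V -> Type) :
  monotonous E ->
  forall X A : V, phylogenetic E X -> ancestor E A X -> phylogenetic E A.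
Proof.
  intros Hm X A [al [[Hprim HalX] Huniv]] [g [Hg0 HgL]].
  set (N := ev_len al).
  destruct (height_exists (E:=E) X) as [hX HX].
  destruct (height_exists (E:=E) A) as [hA HA].
  assert (HAX : le_inf hA hX) by (apply (mono_anc Hm A X); [exists g; auto|auto|auto]).
  destruct hX as [n|]; [|exfalso; exact (HX al (conj Hprim HalX))].
  destruct hA as [m|]; [|contradiction]. simpl in HAX.
  assert (HnN : n <= N) by (apply (proj2 HX); split; auto).
  pose proof HA as HA0.
  destruct HA as [[d [[Hdprim HdA] Hdlen]] Hdmin].
  assert (key : forall (b : evolution V E) (Hb : terminal b = initial g) (r : nat -> nat),
    (forall k, k < N -> r k < r (S k)) -> r N <= ev_len (concat b g Hb) ->
    (forall k, k <= N -> isotypic E (ev_vert al k) (ev_vert (concat b g Hb) (r k))) ->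
    terminal b = A ->
    forall k, k < m -> r k < ev_len b).
  { intros b Hb r Hr HrN Hiso HbA k Hk.
    destruct (lt_dec (r k) (ev_len b)) as [l|l]; auto. exfalso.
    assert (HrkN : r k <= r N) by (pose proof (incr_gap r N Hr k N); lia).
    rewrite concat_len in HrN.
    set (i := r k - ev_len b).
    assert (Hvi : ev_vert (concat b g Hb) (r k) = ev_vert g i).
    { replace (r k) with (ev_len b + i) by lia. apply concat_r. }
    assert (HAY : ancestor E A (ev_vert g i)).
    { exists (prefix g i ltac:(lia)). split; auto. }
    destruct (Hiso k ltac:(lia)) as [_ HYa]. rewrite Hvi in HYa.
    destruct (height_exists (E:=E) (ev_vert al k)) as [hk Hk'].
    destruct (height_exists (E:=E) (ev_vert g i)) as [hY HY].
    assert (Hpk : full_evolution E (ev_vert al k) (prefix al k ltac:(unfold N in *; lia))).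
    { split; auto. }
    assert (Hj : exists j, hk = Some j /\ j <= k).
    { destruct hk as [j|].
      - exists j. split; auto. apply (proj2 Hk') in Hpk. exact Hpk.
      - exfalso. exact (Hk' _ Hpk). }
    destruct Hj as [j [-> Hjk]].
    pose proof (mono_anc Hm _ _ _ _ HAY HA0 HY) as h1.
    pose proof (mono_anc Hm _ _ _ _ HYa HY Hk') as h2.
    pose proof (le_inf_trans _ _ _ h1 h2) as h3. simpl in h3. lia. }
  assert (HmN : m <= N) by lia.
  assert (Hd1 : terminal d = initial g) by congruence.
  assert (Hfull : forall (b : evolution V E) (Hb : terminal b = initial g),
     full_evolution E A b -> full_evolution E X (concat b g Hb)).
  { intros b Hb [Hbp HbA]. split.
    - unfold initial. rewrite concat_l by lia. exact Hbp.
    - unfold terminal. rewrite concat_len, concat_r. exact HgL. }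
  exists d. split; [split; auto|].
  intros b Hbf. pose proof Hbf as [Hbprim HbA].
  assert (Hb1 : terminal b = initial g) by congruence.
  destruct (Huniv _ (Hfull d Hd1 (conj Hdprim HdA))) as [_ [r' [Hr' [Hr'N Hiso']]]].
  destruct (Huniv _ (Hfull b Hb1 Hbf)) as [_ [r [Hr [HrN Hiso]]]].
  pose proof (key d Hd1 r' Hr' Hr'N Hiso' HdA) as Kd.
  pose proof (key b Hb1 r Hr HrN Hiso HbA) as Kb.
  assert (Hr'k : forall k, k < m -> r' k = k).
  { intros k Hk. pose proof (incr_gap r' N Hr' 0 k ltac:(lia)).
    pose proof (incr_gap r' N Hr' k (m-1) ltac:(lia)).
    pose proof (Kd (m-1) ltac:(lia)). lia. }
  assert (Hmb : m <= ev_len b) by (apply Hdmin; exact Hbf).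
  split; [lia|].
  exists (fun k => if k <? m then r k else ev_len b).
  split; [|split].
  - intros k Hk. rewrite Hdlen in Hk.
    rewrite (proj2 (Nat.ltb_lt _ _) Hk).
    destruct (S k <? m) eqn:e.
    + apply Nat.ltb_lt in e. apply Hr. lia.
    + apply Kb; lia.
  - rewrite Hdlen, Nat.ltb_irrefl. lia.
  - intros k Hk. rewrite Hdlen in Hk. destruct (k <? m) eqn:e.
    + apply Nat.ltb_lt in e.
      pose proof (Hiso' k ltac:(lia)) as I1. rewrite Hr'k, concat_l in I1 by lia.
      pose proof (Hiso k ltac:(lia)) as I2.
      pose proof (Kb k e).
      rewrite concat_l in I2 by lia.
      exact (iso_trans _ _ _ (iso_sym _ _ I1) I2).
    + apply Nat.ltb_ge in e. assert (k = m) by lia. subst k.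
      rewrite <- Hdlen. fold (terminal d). fold (terminal b).
      rewrite HdA, HbA. apply iso_refl.
Qed.
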